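(* Let $\{G^i\}_{i\in I}$ be a finite family of games over the same graph $\Gamma=(V,E)$ such that each $G^i$ has a nonempty set of Nash equilibria, and let $C,D\subseteq V$. Then $\prod_{i\in I}G^i\vDash C\rhd D$ if and only if $G^i\vDash C\rhd D$ for each $i\in I$.
   Context: A game over a finite simple undirected graph $\Gamma=(V,E)$ is a strategic game $(V,\{S_v\}_{v\in V},\{u_v\}_{v\in V})$ with player set $V$, finite strategy sets, and real pay-off functions $u_v$ depending only on the strategies of $v$ and its neighbours. $NE(G)$ is the set of pure Nash equilibria. For profiles $\mathbf s,\mathbf t$ and $X\subseteq V$, $\mathbf s=_X\mathbf t$ means they agree on every player of $X$; $G\vDash C\rhd D$ means for all $\mathbf s,\mathbf t\in NE(G)$, $\mathbf s=_C\mathbf t$ implies $\mathbf s=_D\mathbf t$. If $G^i=(V,\{S^i_v\},\{u^i_v\})$, the product $\prod_{i\in I}G^i$ is the game with player set $V$, strategy sets $S_v=\prod_{i\in I}S^i_v$, and pay-offs $u_v=\sum_{i\in I}u^i_v$ (each $u^i_v$ evaluated at the $i$-th components of the profile). *)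

(* Defs.v *)
From HB Require Import structures.
From mathcomp Require Import all_boot all_order all_algebra.
Set Implicit Arguments. Unset Strict Implicit. Unset Printing Implicit Defensive.
Import Order.TTheory GRing.Theory Num.Theory.
Local Open Scope ring_scope.

Record game (V : finType) (adj : rel V) (R : realFieldType) := Game {
  strat : V -> finType;
  payoff : V -> (forall w : V, strat w) -> R;
  payoff_local : forall (v : V) (s t : forall w : V, strat w),
      (forall w : V, (w == v) || adj v w -> s w = t w) ->
      payoff v s = payoff v t
}.

Arguments strat {V adj R}.
Arguments payoff {V adj R}.

Definition profile (V : finType) (adj : rel V) (R : realFieldType)
  (G : game adj R) := forall v : V, strat G v.

Definition is_NE (V : finType) (adj : rel V) (R : realFieldType)
  (G : game adj R) (s : profile G) : Prop :=
  forall (v : V) (x : strat G v), payoff G v (dfwith s x) <= payoff G v s.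

Definition agree_on (V : finType) (T : V -> Type) (X : {set V})
  (s t : forall v : V, T v) : Prop :=
  forall v : V, v \in X -> s v = t v.

Definition entails (V : finType) (adj : rel V) (R : realFieldType)
  (G : game adj R) (C D : {set V}) : Prop :=
  forall s t : profile G, is_NE s -> is_NE t ->
    agree_on C s t -> agree_on D s t.

Section Product.
Variables (V : finType) (adj : rel V) (R : realFieldType) (I : finType)
  (G : I -> game adj R).

Definition prod_strat (v : V) : finType :=
  {dffun forall i : I, strat (G i) v}.

Definition component (s : forall v : V, prod_strat v) (i : I) :
  forall v : V, strat (G i) v := fun v => s v i.

Definition prod_payoff (v : V) (s : forall w : V, prod_strat w) : R :=
  \sum_(i : I) payoff (G i) v (component s i).

Lemma prod_payoff_local (v : V) (s t : forall w : V, prod_strat w) :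
  (forall w : V, (w == v) || adj v w -> s w = t w) ->
  prod_payoff v s = prod_payoff v t.
Proof.
move=> H; apply: eq_bigr => i _; apply: payoff_local => w Hw.
by rewrite /component (H w Hw).
Qed.

Definition prod_game : game adj R :=
  @Game V adj R prod_strat prod_payoff prod_payoff_local.
End Product.

(* Main.v *)
Require Import Defs.
From mathcomp Require Import all_boot all_order all_algebra.
From Stdlib Require Import ClassicalEpsilon.
Set Implicit Arguments. Unset Strict Implicit. Unset Printing Implicit Defensive.
Import Order.TTheory GRing.Theory Num.Theory.
Local Open Scope ring_scope.

Lemma NE_prod (V : finType) (adj : rel V) (R : realFieldType) (I : finType)
  (G : I -> game adj R) (s : profile (prod_game G)) :
  is_NE s <-> forall i, is_NE (component s i).
Proof.
split.
- move=> H i v y; rewrite leNgt; apply/negP => Hlt.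
  pose x : prod_strat G v := finfun (dfwith (fun j => s v j) y).
  have := H v x; rewrite /= /prod_payoff.
  rewrite (bigD1 i) //= [X in _ <= X](bigD1 i) //=.
  rewrite (@eq_bigr _ _ _ _ _ _ _ (fun j => payoff (G j) v (component s j))); last first.
    move=> j Hj; apply: payoff_local => w _; rewrite /component.
    case: dfwithP => [|w' Hw] //.
    by rewrite ffunE dfwith_out // eq_sym.
  rewrite (@payoff_local _ _ _ (G i) v _ (dfwith (component s i) y)); last first.
    move=> w _; rewrite /component.
    case: dfwithP => [|w' Hw]; first by rewrite ffunE !dfwith_in.
    by rewrite dfwith_out.
  by rewrite lerD2r leNgt Hlt.
- move=> H v x; rewrite /= /prod_payoff; apply: ler_sum => i _.
  rewrite (@payoff_local _ _ _ (G i) v _ (dfwith (component s i) (x i))); first exact: H.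
  move=> w _; rewrite /component.
  case: dfwithP => [|w' Hw]; first by rewrite dfwith_in.
  by rewrite dfwith_out.
Qed.

Theorem lemma19 (V : finType) (adj : rel V)
  (adj_sym : symmetric adj) (adj_irr : irreflexive adj)
  (R : realFieldType) (I : finType) (G : I -> game adj R)
  (C D : {set V}) :
  (forall i : I, exists s : profile (G i), is_NE s) ->
  (entails (prod_game G) C D <-> forall i : I, entails (G i) C D).
Proof.
move=> HE; split.
- move=> H i s t Hs Ht Hst.
  pose e j := proj1_sig (constructive_indefinite_description _ (HE j)).
  have He j : is_NE (e j) := proj2_sig (constructive_indefinite_description _ (HE j)).
  pose mk (u : profile (G i)) : profile (prod_game G) :=
    fun v => (finfun (dfwith (fun j => e j v) (u v)) : prod_strat G v).
  have NEl (u : profile (G i)) : is_NE u -> is_NE (mk u).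
    move=> Hu; apply/NE_prod => j w y.
    case: (eqVneq i j) => [Eij|Hij].
    + subst j. rewrite (@payoff_local _ _ _ (G i) w _ (dfwith u y)); last first.
        move=> z _; rewrite /component.
        case: dfwithP => [|z' Hz]; first by rewrite !dfwith_in.
        by rewrite ffunE dfwith_in dfwith_out.
      rewrite (@payoff_local _ _ _ (G i) w (component _ i) u); first exact: Hu.
      by move=> z _; rewrite /component ffunE dfwith_in.
    + rewrite (@payoff_local _ _ _ (G j) w _ (dfwith (e j) y)); last first.
        move=> z _; rewrite /component.
        case: dfwithP => [|z' Hz]; first by rewrite !dfwith_in.
        by rewrite ffunE !dfwith_out.
      rewrite (@payoff_local _ _ _ (G j) w (component _ j) (e j)); first exact: He.
      by move=> z _; rewrite /component ffunE dfwith_out.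
  have H2 := H (mk s) (mk t) (NEl s Hs) (NEl t Ht).
  have Hag : agree_on C (mk s) (mk t).
    move=> w Hw; rewrite /mk; apply/ffunP => j; rewrite !ffunE.
    case: (eqVneq i j) => [Eij|Hij]; first by subst j; rewrite !dfwith_in Hst.
    by rewrite !dfwith_out.
  move=> v Hv; have := H2 Hag v Hv.
  move=> /(congr1 (fun f : prod_strat G v => f i)).
  by rewrite /mk !ffunE !dfwith_in.
- move=> H s t Hs Ht Hst v Hv; apply/ffunP => i.
  have := H i (component s i) (component t i).
  move/NE_prod: Hs => Hs; move/NE_prod: Ht => Ht.
  move=> H2; apply: (H2 (Hs i) (Ht i) _ v Hv).
  by move=> w Hw; rewrite /component (Hst w Hw).
Qed.
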